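(* There exists a two-stack automaton $\Gamma_1$ such that $\alpha_n:=G(\Gamma_1,n)\in\{0,1\}$ for all $n$, and such that the infinite binary word $\alpha_1\alpha_2\alpha_3\cdots$ contains every finite binary word as a (consecutive) subword.
   Context: Let $X=\{x_i: i\in\mathbb Z\}$, $X^{-1}=\{x_i^{-1}\}$, $Y=\{y_i\}$, $Y^{-1}=\{y_i^{-1}\}$ be formal labels, and $\varepsilon$ a further label; write $w_1\sim w_2$ if both lie in $X\cup X^{-1}$ or both lie in $Y\cup Y^{-1}$. A two-stack automaton is a finite directed graph $\Gamma$ with vertices $v_1,\dots,v_m$, each vertex $v$ labelled by $\rho(v)\in X\cup X^{-1}\cup Y\cup Y^{-1}\cup\{\varepsilon\}$, such that $\rho(v_1)=\rho(v_2)=\varepsilon$ and there is no edge $v_i\to v_j$ with $\rho(v_i)\sim\rho(v_j)$. A path $\gamma=\gamma_1\cdots\gamma_n$ is a sequence of vertices joined by edges; its length is $n$. Traversing $\gamma$, keep two words $w_X\in X^*$, $w_Y\in Y^*$, initially empty; entering a vertex labelled $x_i$ appends $x_i$ to $w_X$, labelled $x_i^{-1}$ removes $x_i$ from the end of $w_X$ (similarly for $Y$ and $w_Y$), and labelled $\varepsilon$ does nothing. The path is balanced if every step is well defined and both words are empty at the end. $G(\Gamma,n)$ denotes the number of balanced paths of length $n$ from $v_1$ to $v_2$. *)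

(* Defs.v *)
From HB Require Import structures.
From mathcomp Require Import all_boot all_order all_algebra.
Set Implicit Arguments. Unset Strict Implicit. Unset Printing Implicit Defensive.

Inductive label : Type :=
  | LX of int | LXinv of int | LY of int | LYinv of int | Leps.

Definition lsim (a b : label) : bool :=
  match a, b with
  | (LX _ | LXinv _), (LX _ | LXinv _) => true
  | (LY _ | LYinv _), (LY _ | LYinv _) => true
  | _, _ => false
  end.

Unset Implicit Arguments.
Record two_stack_automaton := TwoStackAutomaton {
  tsa_V : finType;
  tsa_rho : tsa_V -> label;
  tsa_edge : rel tsa_V;
  tsa_v1 : tsa_V;
  tsa_v2 : tsa_V;
  tsa_v12 : tsa_v1 != tsa_v2;
  tsa_rho1 : tsa_rho tsa_v1 = Leps;
  tsa_rho2 : tsa_rho tsa_v2 = Leps;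
  tsa_edge_ok : forall a b, tsa_edge a b -> ~~ lsim (tsa_rho a) (tsa_rho b)
}.
Set Implicit Arguments.

Definition pop (i : int) (w : seq int) : option (seq int) :=
  match w with
  | [::] => None
  | a :: w' => if last a w' == i then Some (belast a w') else None
  end.

Definition step (l : label) (s : seq int * seq int) : option (seq int * seq int) :=
  let: (wx, wy) := s in
  match l with
  | LX i => Some (rcons wx i, wy)
  | LXinv i => omap (fun wx' => (wx', wy)) (pop i wx)
  | LY i => Some (wx, rcons wy i)
  | LYinv i => omap (fun wy' => (wx, wy')) (pop i wy)
  | Leps => Some (wx, wy)
  end.

Definition run (ls : seq label) : option (seq int * seq int) :=
  foldl (fun os l => if os is Some s then step l s else None)
        (Some ([::], [::])) ls.

Section Paths.
Variable A : two_stack_automaton.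

Definition walk_v1_v2 (p : seq (tsa_V A)) : bool :=
  match p with
  | [::] => false
  | a :: p' => [&& a == tsa_v1 A, path (tsa_edge A) a p' & last a p' == tsa_v2 A]
  end.

Definition balanced (p : seq (tsa_V A)) : bool :=
  run (map (tsa_rho A) p) == Some ([::], [::]).

Definition G (n : nat) : nat :=
  #|[pred t : n.-tuple (tsa_V A) | walk_v1_v2 t && balanced t]|.
End Paths.

(* Main.v *)
Require Import Defs.
From HB Require Import structures.
From mathcomp Require Import all_boot all_order all_algebra.
From mathcomp Require Import zify.
Set Implicit Arguments. Unset Strict Implicit. Unset Printing Implicit Defensive.
Inductive V := Vv1 | Vv2 | I1 | SY2 | PX0c | PX1c | PX2c | QY0c | QY1n | QY1x | PX0n | PX1n | PX2n | QY0n | E1 | SX2 | RY0 | RY1 | RY2 | SX0 | SX1 | E2 | TE | TX0 | TX1 | TX2 | TA | TB | TC | TY0 | TY1 | TY2 | TD.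
Definition allV := [:: Vv1; Vv2; I1; SY2; PX0c; PX1c; PX2c; QY0c; QY1n; QY1x; PX0n; PX1n; PX2n; QY0n; E1; SX2; RY0; RY1; RY2; SX0; SX1; E2; TE; TX0; TX1; TX2; TA; TB; TC; TY0; TY1; TY2; TD].
Definition code (v : V) : nat := match v with Vv1 => 0 | Vv2 => 1 | I1 => 2 | SY2 => 3 | PX0c => 4 | PX1c => 5 | PX2c => 6 | QY0c => 7 | QY1n => 8 | QY1x => 9 | PX0n => 10 | PX1n => 11 | PX2n => 12 | QY0n => 13 | E1 => 14 | SX2 => 15 | RY0 => 16 | RY1 => 17 | RY2 => 18 | SX0 => 19 | SX1 => 20 | E2 => 21 | TE => 22 | TX0 => 23 | TX1 => 24 | TX2 => 25 | TA => 26 | TB => 27 | TC => 28 | TY0 => 29 | TY1 => 30 | TY2 => 31 | TD => 32 end.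
Definition decode (n : nat) : V := match n with 0 => Vv1 | 1 => Vv2 | 2 => I1 | 3 => SY2 | 4 => PX0c | 5 => PX1c | 6 => PX2c | 7 => QY0c | 8 => QY1n | 9 => QY1x | 10 => PX0n | 11 => PX1n | 12 => PX2n | 13 => QY0n | 14 => E1 | 15 => SX2 | 16 => RY0 | 17 => RY1 | 18 => RY2 | 19 => SX0 | 20 => SX1 | 21 => E2 | 22 => TE | 23 => TX0 | 24 => TX1 | 25 => TX2 | 26 => TA | 27 => TB | 28 => TC | 29 => TY0 | 30 => TY1 | 31 => TY2 | 32 => TD | _ => Vv1 end.
Definition rhoV (v : V) : label := match v with Vv1 => Leps | Vv2 => Leps | I1 => LX (Posz 2) | SY2 => LY (Posz 2) | PX0c => LXinv (Posz 0) | PX1c => LXinv (Posz 1) | PX2c => LXinv (Posz 2) | QY0c => LY (Posz 0) | QY1n => LY (Posz 1) | QY1x => LY (Posz 1) | PX0n => LXinv (Posz 0) | PX1n => LXinv (Posz 1) | PX2n => LXinv (Posz 2) | QY0n => LY (Posz 0) | E1 => Leps | SX2 => LX (Posz 2) | RY0 => LYinv (Posz 0) | RY1 => LYinv (Posz 1) | RY2 => LYinv (Posz 2) | SX0 => LX (Posz 0) | SX1 => LX (Posz 1) | E2 => Leps | TE => Leps | TX0 => LXinv (Posz 0) | TX1 => LXinv (Posz 1) | TX2 => LXinv (Posz 2) | TA => Leps | TB => Leps | TC => Leps | TY0 => LYinv (Posz 0) | TY1 => LYinv (Posz 1) | TY2 => LYinv (Posz 2) | TD => Leps end.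
Definition succs (v : V) : seq V := match v with Vv1 => [:: I1] | Vv2 => [::] | I1 => [:: SY2] | SY2 => [:: PX0c; PX1c; PX2c] | PX0c => [:: QY1n] | PX1c => [:: QY0c; TE] | PX2c => [:: QY1x] | QY0c => [:: PX0c; PX1c; PX2c] | QY1n => [:: PX0n; PX1n; PX2n] | QY1x => [:: SX2] | PX0n => [:: QY0n] | PX1n => [:: QY1n; TE] | PX2n => [:: E1] | QY0n => [:: PX0n; PX1n; PX2n] | E1 => [:: SX2] | SX2 => [:: RY0; RY1; RY2] | RY0 => [:: SX0] | RY1 => [:: SX1] | RY2 => [:: E2] | SX0 => [:: RY0; RY1; RY2] | SX1 => [:: RY0; RY1; RY2] | E2 => [:: SY2] | TE => [:: TX0; TX1; TX2] | TX0 => [:: TA] | TX1 => [:: TA] | TX2 => [:: TC] | TA => [:: TB] | TB => [:: TX0; TX1; TX2] | TC => [:: TY0; TY1; TY2] | TY0 => [:: TD] | TY1 => [:: TD] | TY2 => [:: Vv2] | TD => [:: TY0; TY1; TY2] end.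
Lemma codeK : cancel code decode. Proof. by case. Qed.
HB.instance Definition _ := Countable.copy V (can_type codeK).
Lemma allVP : Finite.axiom allV. Proof. by case. Qed.
HB.instance Definition _ := isFinite.Build V allVP.

Definition edgeV : rel V := fun a b => b \in succs a.
Lemma edge_okV : forall a b, edgeV a b -> ~~ lsim (rhoV a) (rhoV b).
Proof. by case; case. Qed.
Lemma succs_uniq v : uniq (succs v). Proof. by case: v. Qed.

Definition Aut := @TwoStackAutomaton V rhoV edgeV Vv1 Vv2 erefl erefl erefl edge_okV.

Definition runS (o : option (seq int * seq int)) (ls : seq label) :=
  foldl (fun os l => if os is Some s then step l s else None) o ls.

Fixpoint cnt (k : nat) (v : V) (s : seq int * seq int) : nat :=
 match k with
 | 0 => (if v is Vv2 then true else false) && (s == ([::],[::]))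
 | k'.+1 => sumn [seq (if step (rhoV b) s is Some s' then cnt k' b s' else 0) | b <- succs v]
 end.

Lemma runS_None ls : runS None ls = None.
Proof. by elim: ls. Qed.

Lemma sum_tuple_cons k (F : (k.+1).-tuple V -> nat) :
  \sum_(t : (k.+1).-tuple V) F t = \sum_(x : V) \sum_(t : k.-tuple V) F [tuple of x :: t].
Proof.
rewrite pair_big /=.
pose h (p : V * k.-tuple V) : (k.+1).-tuple V := [tuple of p.1 :: p.2].
pose g (t : (k.+1).-tuple V) : V * k.-tuple V := (thead t, behead_tuple t).
rewrite (reindex h) /=; last first.
  exists g => [[x t]|t] _ /=.
    by congr pair; apply: val_inj.
  by case/tupleP: t => x t; apply: val_inj.
by apply: eq_bigr => -[x t].
Qed.

Lemma cnt_card k v s :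
  #|[pred t : k.-tuple V | path edgeV v t && (last v t == Vv2)
       && (runS (Some s) (map rhoV t) == Some ([::],[::]))]| = cnt k v s.
Proof.
elim: k v s => [|k IH] v s.
  rewrite -sum1_card big_mkcond /=.
  rewrite (big_pred1 [tuple]) /=; last by move=> t; apply/esym/eqP/tuple0.
  have E : (Some s == Some ([::],[::])) = (s == ([::],[::])) by apply/eqP/eqP => [[]|->].
  rewrite inE /= E; case: v; by case: (s == _).
rewrite -sum1_card big_mkcond /= sum_tuple_cons /= sumnE big_map.
rewrite (big_uniq _ (succs_uniq v)) /= [RHS]big_mkcond /=.
apply: eq_bigr => x _.
rewrite -/(edgeV v x).
case: (boolP (edgeV v x)) => hx; last first.
  by rewrite big1 // => t _; rewrite inE /= (negbTE hx).
have -> : \sum_(t : k.-tuple V) (if [tuple of x :: t] \in [pred t0 : (k.+1).-tuple V | path edgeV v t0 && (last v t0 == Vv2)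
       && (runS (Some s) (map rhoV t0) == Some ([::],[::]))] then 1 else 0)
  = \sum_(t : k.-tuple V) (if t \in [pred t0 : k.-tuple V | path edgeV x t0 && (last x t0 == Vv2)
       && (runS (step (rhoV x) s) (map rhoV t0) == Some ([::],[::]))] then 1 else 0).
  by apply: eq_bigr => t _; rewrite !inE /= hx.
case: (step (rhoV x) s) => [s'|].
  by rewrite -IH -big_mkcond /= sum1_card.
by rewrite big1 // => t _; rewrite inE runS_None andbF.
Qed.


Lemma G_cnt n : G Aut n.+1 = cnt n Vv1 ([::],[::]).
Proof.
rewrite /G -sum1_card big_mkcond /= sum_tuple_cons (bigD1 Vv1) //= [X in _ + X]big1 ?addn0; last first.
  move=> x hx; apply: big1 => t _; rewrite inE /= /walk_v1_v2 /=.
  by rewrite (negbTE hx).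
rewrite -cnt_card -sum1_card big_mkcond /=.
rewrite [RHS]big_mkcond /=; apply: eq_bigr => t _; rewrite !inE /= /walk_v1_v2 /balanced /=; reflexivity.
Qed.

Lemma G0 : G Aut 0 = 0.
Proof. by rewrite /G; apply: eq_card0 => t; rewrite inE [t]tuple0. Qed.

Definition bi (b : bool) : int := Posz (nat_of_bool b).
HB.lock Definition Ys (ys : seq bool) : seq int := Posz 2 :: map bi ys.

Lemma pop_rcons i w a : pop i (rcons w a) = if a == i then Some w else None.
Proof. by case: w => [|c w] /=; rewrite ?last_rcons ?belast_rcons. Qed.

Lemma Ys_nil : Ys [::] = [:: Posz 2]. Proof. by rewrite Ys.unlock. Qed.

Lemma Ys_rcons ys b : Ys (rcons ys b) = rcons (Ys ys) (bi b).
Proof. by rewrite Ys.unlock map_rcons. Qed.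

Arguments pop : simpl never.

Ltac fin := repeat (case: eqP => ? /=); lia.
Ltac nx k := case: k => [|k]; rewrite /= ?pop_rcons /= ?add0n ?addn0 //; try fin.

Lemma tailY ys k : cnt k TD ([::], Ys ys) = (k == 2 * size ys + 2).
Proof.
elim/last_ind: ys k => [|ys b IH] k.
  by rewrite Ys_nil; nx k; nx k; nx k.
rewrite Ys_rcons size_rcons.
nx k; case: b => /=; rewrite ?add0n ?addn0; nx k; rewrite ?IH; fin.
Qed.


Lemma cnt_TC k s : cnt k TC s = cnt k TD s. Proof. by case: k. Qed.
Lemma cnt_TE k s : cnt k TE s = cnt k TB s. Proof. by case: k. Qed.

Lemma tailX xs ys k : cnt k TB (Ys xs, Ys ys) = (k == 3 * size xs + 2 * size ys + 4).
Proof.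
elim/last_ind: xs k => [|xs b IH] k.
  rewrite [Ys [::]]Ys_nil; nx k; nx k; rewrite cnt_TC tailY; fin.
rewrite Ys_rcons size_rcons.
nx k; case: b => /=; rewrite ?add0n ?addn0; nx k; nx k; rewrite ?IH; fin.
Qed.

Lemma pop1 i a : pop i [:: a] = if a == i then Some [::] else None.
Proof. by []. Qed.

Lemma Ys_rcons0 ys : rcons (Ys ys) (Posz 0) = Ys (rcons ys false).
Proof. by rewrite Ys_rcons. Qed.
Lemma Ys_rcons1 ys : rcons (Ys ys) (Posz 1) = Ys (rcons ys true).
Proof. by rewrite Ys_rcons. Qed.

Lemma nseq_false_cons B bs : nseq B false ++ false :: bs = nseq B.+1 false ++ bs.
Proof. by elim: B => //= B ->. Qed.

Lemma nth_nseq_true B bs k :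
  nth false (nseq B false ++ true :: bs) k = (k == B) || nth false (nseq B.+1 false ++ bs) k.
Proof.
elim: B k => [|B IH] [|k] //=.
Qed.

Lemma nth_nseq_lt B bs k : k < B -> nth false (nseq B false ++ bs) k = false.
Proof. by move=> h; rewrite nth_cat size_nseq h nth_nseq h. Qed.

Lemma cnt_QY1n k s : cnt k QY1n s = cnt k QY0n s. Proof. by case: k. Qed.

Lemma Ys_rev_cons b bs : Ys (rev (b :: bs)) = rcons (Ys (rev bs)) (bi b).
Proof. by rewrite rev_cons Ys_rcons. Qed.

Lemma T1n bs ys k :
  cnt k QY0n (Ys (rev bs), Ys ys) =
  nth false (nseq (3 * size bs + 3 + 2 * size ys) false ++ bs) k +
  (2 * size bs + 3 <= k) * cnt (k - (2 * size bs + 3)) SX2 ([:: Posz 2], Ys (ys ++ bs)).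
Proof.
elim: bs ys k => [|b bs IH] ys k.
  rewrite cats0 nth_nseq if_same /= [Ys [::]]Ys_nil.
  nx k; nx k; nx k; by rewrite mul1n cats0 !subSS subn0.
rewrite Ys_rev_cons.
have -> : 2 * size (b :: bs) + 3 = (2 * size bs + 3).+2 by rewrite /=; lia.
have -> : 3 * size (b :: bs) + 3 + 2 * size ys = (3 * size bs + 2 * size ys + 4).+2 by rewrite /=; lia.
nx k; case: b => /=; rewrite ?add0n ?addn0.
  nx k; rewrite Ys_rcons1 cnt_QY1n IH cnt_TE tailX size_rcons size_rev cat_rcons !subSS !ltnS.
  have -> : 3 * size bs + 3 + 2 * (size ys).+1 = (3 * size bs + 2 * size ys + 4).+1 by lia.
  rewrite nth_nseq_true.
  case: (eqVneq k (3 * size bs + 2 * size ys + 4)) => [->|ne] /=.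
    by rewrite (@nth_nseq_lt _.+1 bs _ (ltnSn _)) add0n addnC.
  by rewrite addn0.
nx k; rewrite Ys_rcons0 IH size_rcons cat_rcons !subSS !ltnS nseq_false_cons.
by have -> : 3 * size bs + 3 + 2 * (size ys).+1 = (3 * size bs + 2 * size ys + 4).+1 by lia.
Qed.

Fixpoint inc (bs : seq bool) : seq bool :=
  match bs with
  | [::] => [:: true]
  | false :: bs' => true :: bs'
  | true :: bs' => false :: inc bs'
  end.

Lemma T1c bs ys k :
  cnt k QY0c (Ys (rev bs), Ys ys) =
  nth false (nseq (3 * size bs + 3 + 2 * size ys) false ++ bs) k +
  (2 * size bs + 3 <= k) * cnt (k - (2 * size bs + 3)) SX2 ([:: Posz 2], Ys (ys ++ inc bs)).
Proof.
elim: bs ys k => [|b bs IH] ys k.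
  rewrite cats0 nth_nseq if_same /= [Ys [::]]Ys_nil.
  nx k; nx k; nx k; by rewrite mul1n Ys_rcons1 cats1 !subSS subn0.
rewrite Ys_rev_cons.
have -> : 2 * size (b :: bs) + 3 = (2 * size bs + 3).+2 by rewrite /=; lia.
have -> : 3 * size (b :: bs) + 3 + 2 * size ys = (3 * size bs + 2 * size ys + 4).+2 by rewrite /=; lia.
nx k; case: b => /=; rewrite ?add0n ?addn0.
  nx k; rewrite Ys_rcons0 IH cnt_TE tailX size_rcons size_rev cat_rcons !subSS !ltnS.
  have -> : 3 * size bs + 3 + 2 * (size ys).+1 = (3 * size bs + 2 * size ys + 4).+1 by lia.
  rewrite nth_nseq_true.
  case: (eqVneq k (3 * size bs + 2 * size ys + 4)) => [->|ne] /=.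
    by rewrite (@nth_nseq_lt _.+1 bs _ (ltnSn _)) add0n addnC.
  by rewrite addn0.
nx k; rewrite Ys_rcons1 cnt_QY1n T1n size_rcons cat_rcons !subSS !ltnS nseq_false_cons.
by have -> : 3 * size bs + 3 + 2 * (size ys).+1 = (3 * size bs + 2 * size ys + 4).+1 by lia.
Qed.

Lemma cnt_SX0 k s : cnt k SX0 s = cnt k SX2 s. Proof. by case: k. Qed.
Lemma cnt_SX1 k s : cnt k SX1 s = cnt k SX2 s. Proof. by case: k. Qed.
Lemma cnt_SY2 k s : cnt k SY2 s = cnt k QY0c s. Proof. by case: k. Qed.

Lemma T2 zs xs k :
  cnt k SX2 (Ys xs, Ys zs) =
  (2 * size zs + 3 <= k) * cnt (k - (2 * size zs + 3)) SY2 (Ys (xs ++ rev zs), Ys [::]).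
Proof.
elim/last_ind: zs xs k => [|zs b IH] xs k.
  rewrite cats0 [Ys [::]]Ys_nil.
  nx k; nx k; nx k; by rewrite mul1n !subSS subn0.
rewrite Ys_rcons size_rcons.
have -> : 2 * (size zs).+1 + 3 = (2 * size zs + 3).+2 by lia.
nx k; case: b => /=; rewrite ?add0n ?addn0; nx k.
  by rewrite Ys_rcons1 cnt_SX1 IH rev_rcons cat_rcons !subSS !ltnS.
by rewrite Ys_rcons0 cnt_SX0 IH rev_rcons cat_rcons !subSS !ltnS.
Qed.

Definition Sc bs := (Ys (rev bs), Ys [::]).
Definition D bs := 2 * size bs + 2 * size (inc bs) + 6.

Lemma comb a b k (F : nat -> nat) :
  (a <= k) * ((b <= k - a) * F (k - a - b)) = (a + b <= k) * F (k - (a + b)).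
Proof.
case: (leqP a k) => h1; last by rewrite mul0n; case: leqP => //; lia.
rewrite mul1n subnDA; congr (_ * _).
by congr (nat_of_bool _); apply/idP/idP => h; lia.
Qed.

Lemma round bs k :
  cnt k SY2 (Sc bs) =
  nth false (nseq (3 * size bs + 3) false ++ bs) k + (D bs <= k) * cnt (k - D bs) SY2 (Sc (inc bs)).
Proof.
rewrite /Sc cnt_SY2 T1c /= muln0 addn0 -Ys_nil T2 (comb _ _ _ (fun j => cnt j SY2 _)) /D.
by have -> : 2 * size bs + 3 + (2 * size (inc bs) + 3) = 2 * size bs + 2 * size (inc bs) + 6 by lia.
Qed.

Lemma size_inc bs : size bs <= size (inc bs).
Proof. elim: bs => [|[] bs IH] //=. Qed.

Lemma round_big bs k : D bs <= k ->
  cnt k SY2 (Sc bs) = cnt (k - D bs) SY2 (Sc (inc bs)).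
Proof.
move=> h; rewrite round h mul1n nth_default ?add0n // size_cat size_nseq.
move: h; rewrite /D; have := size_inc bs; lia.
Qed.

Lemma round_small bs k : k < D bs ->
  cnt k SY2 (Sc bs) = nth false (nseq (3 * size bs + 3) false ++ bs) k.
Proof. by move=> h; rewrite round leqNgt h mul0n addn0. Qed.

Lemma le1 k bs : cnt k SY2 (Sc bs) <= 1.
Proof.
elim: k {-2}k (leqnn k) bs => [|n IH] k hk bs.
  by rewrite round_small ?leq_b1 //; move: hk; rewrite /D; lia.
case: (ltnP k (D bs)) => h; first by rewrite round_small ?leq_b1.
rewrite round_big //; apply: IH; move: hk h; rewrite /D; lia.
Qed.

Lemma start k : cnt k.+2 Vv1 ([::],[::]) = cnt k SY2 (Sc [::]).
Proof. by rewrite /Sc (_ : rev [::] = [::] :> seq bool) // Ys_nil /= !addn0. Qed.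

Lemma G01 n : G Aut n = 0 \/ G Aut n = 1.
Proof.
case: n => [|n]; [by left; exact: G0|].
rewrite G_cnt.
case: n => [|[|n]]; [by left|by left|].
rewrite start; have := le1 n [::].
by case: (cnt n SY2 (Sc [::])) => [|[|]] //; auto.
Qed.

Fixpoint val (bs : seq bool) : nat :=
  if bs is b :: bs' then b + 2 * val bs' else 0.

Lemma val_inc bs : val (inc bs) = (val bs).+1.
Proof. elim: bs => [|[] bs IH] //=; rewrite IH; lia. Qed.

Lemma inc_nil bs : inc bs <> [::].
Proof. by case: bs => [|[] bs]. Qed.

Lemma canon_inc bs : last true bs -> last true (inc bs).
Proof.
elim: bs => [|[] bs IH] //=.
  move=> h; case E: (inc bs) => [|c t]; first by case: (inc_nil E).
  by have := IH h; rewrite E.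
by clear IH; case: bs.
Qed.

Lemma val0 cs : val cs = 0 -> last false cs = false.
Proof. elim: cs => [|d cs IH] //= h; have h1 : val cs = 0 by lia.
have h2 : d = false by case: d h => //=.
by subst d; apply: IH. Qed.

Lemma last_tail (b : bool) bs : last b bs -> last true bs.
Proof. by case: bs. Qed.

Lemma val_inj bs cs : last true bs -> last true cs -> val bs = val cs -> bs = cs.
Proof.
elim: bs cs => [|b bs IH] [|c cs] //=.
- move=> _; case: c => /= hc h; first lia.
  have h1 : val cs = 0 by lia.
  by rewrite val0 in hc.
- move=> + _; case: b => /= hb h; first lia.
  have h1 : val bs = 0 by lia.
  by rewrite val0 in hb.
move=> hb hc h.
have e : b = c by move: hb hc h; case: b; case: c => /= _ _; lia.
subst c; congr cons; apply: IH; [exact: last_tail hb|exact: last_tail hc|lia].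
Qed.

Lemma iter_inc m : val (iter m inc [::]) = m /\ last true (iter m inc [::]).
Proof.
elim: m => [|m [IH1 IH2]] //=; split; first by rewrite val_inc IH1.
exact: canon_inc.
Qed.

Lemma reach bs : last true bs -> iter (val bs) inc [::] = bs.
Proof.
move=> h; have [h1 h2] := iter_inc (val bs); exact: val_inj.
Qed.

Fixpoint P m := if m is m'.+1 then P m' + D (iter m' inc [::]) else 0.

Lemma shiftP m k : cnt (P m + k) SY2 (Sc [::]) = cnt k SY2 (Sc (iter m inc [::])).
Proof.
elim: m k => [|m IH] k //=.
rewrite -addnA IH round_big ?leq_addr //.
by rewrite addKn.
Qed.

Theorem lemma2p3 :
  exists A : two_stack_automaton,
    (forall n : nat, G A n = 0 \/ G A n = 1) /\
    (forall w : seq bool, exists k : nat,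
        forall i : nat, i < size w -> G A (k + i).+1 = nat_of_bool (nth false w i)).
Proof.
exists Aut; split; first exact: G01.
move=> w; set bs := w ++ [:: true].
have hb : last true bs by rewrite /bs last_cat.
exists (P (val bs) + 3 * size bs + 3).+2 => i hi.
rewrite G_cnt addSn addSn start -!addnA shiftP reach //.
rewrite round_small; last by rewrite /D; have := size_inc bs; rewrite /bs size_cat /=; lia.
rewrite nth_cat size_nseq.
rewrite ifF; last by apply/negbTE; rewrite -leqNgt; lia.
rewrite (_ : _ - _ = i); last by lia.
by rewrite /bs nth_cat hi.
Qed.
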